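(* The pointwise limit $\bar V=\lim_{n\to\infty}V^n$ equals the optimal value function $V^{[0,\bar c]}$ on $[0,\infty)\times[0,\bar c]$.
   Context: Let $(W_t)_{t\ge0}$ be a standard Brownian motion and $X_t=x+\mu t+\sigma W_t$ with constants $\mu\in\mathbb R$, $\sigma>0$ and initial value $x\ge 0$; $(\mathcal F_t)_{t\ge0}$ is the completed filtration generated by $X$. Fix $q>0$, $\Lambda>0$, $\bar c>0$. For a set $S\subset[0,\bar c]$, $x\ge0$ and $c\in S$, $\Pi^S_{x,c}$ denotes the set of processes $C=(C_t)_{t\ge0}$ that are non-increasing, right-continuous, $(\mathcal F_t)$-adapted, take values in $S$, and satisfy $C_t\le c$ for all $t\ge 0$ (an immediate reduction at time $0$ is allowed). For such $C$, $X^C_t=X_t-\int_0^t C_s\,ds$, $\tau=\inf\{t\ge0: X^C_t<0\}$, $J(x;C)=\mathbb E\big[\int_0^{\tau}e^{-qs}(C_s+\Lambda)\,ds\big]$ and $V^S(x,c)=\sup_{C\in\Pi^S_{x,c}}J(x;C)$. Let $(\mathcal S^n)_{n\ge0}$ be finite sets with $\{0,\bar c\}=\mathcal S^0\subset\mathcal S^1\subset\cdots\subset[0,\bar c]$, each containing $0$ and $\bar c$, whose mesh size $\delta(\mathcal S^n)$ (maximal gap between consecutive elements) tends to $0$. For $(x,c)\in[0,\infty)\times[0,\bar c]$ let $\tilde c^n=\max\{c'\in\mathcal S^n: c'\le c\}$ and $V^n(x,c)=V^{\mathcal S^n}(x,\tilde c^n)$. Then $V^n(x,c)$ is non-decreasing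 in $n$ and bounded by $V^{[0,\bar c]}(x,c)$, and $\bar V(x,c):=\lim_{n\to\infty}V^n(x,c)$. *)

(* Defs.v *)
From HB Require Import structures.
From mathcomp Require Import all_boot all_order all_algebra.
From mathcomp Require Import all_classical all_reals all_analysis.
Set Implicit Arguments. Unset Strict Implicit. Unset Printing Implicit Defensive.
Import Order.TTheory GRing.Theory Num.Theory.
Import numFieldNormedType.Exports.
Local Open Scope classical_set_scope.
Local Open Scope ring_scope.

Definition indep_rvs {d} {Om : measurableType d} {R : realType}
  (P : probability Om R) (n : nat) (Y : 'I_n -> Om -> R) : Prop :=
  forall B : 'I_n -> set R, (forall i, measurable (B i)) ->
    P (\bigcap_(i in [set: 'I_n]) (Y i @^-1` B i)) =
    (\prod_(i < n) P (Y i @^-1` B i))%E.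

(* Standard Brownian motion on [0, oo) (values at negative times irrelevant). *)
Definition is_std_BM {d} {Om : measurableType d} {R : realType}
  (P : probability Om R) (W : R -> Om -> R) : Prop :=
  [/\ forall w, W 0 w = 0,
      forall w, {within `[0, +oo[, continuous (fun t => W t w)},
      forall t, measurable_fun setT (W t),
      forall s t, 0 <= s -> s < t -> forall B : set R, measurable B ->
        P ((fun w => W t w - W s w) @^-1` B) = normal_prob 0 (Num.sqrt (t - s)) B
    & forall (n : nat) (ts : 'I_n.+1 -> R), 0 <= ts ord0 ->
        (forall i j : 'I_n.+1, (i < j)%N -> ts i < ts j) ->
        indep_rvs P (fun (i : 'I_n) w =>
          W (ts (lift ord0 i)) w - W (ts (widen_ord (leqnSn n) i)) w)].

Definition Xproc {Om : Type} {R : realType} (W : R -> Om -> R) (x mu sigma : R)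
  : R -> Om -> R := fun t w => x + mu * t + sigma * W t w.

Definition nat_filtration {d} {Om : measurableType d} {R : realType}
  (P : probability Om R) (X : R -> Om -> R) (t : R) : set (set Om) :=
  <<s [set A | exists s, 0 <= s <= t /\
                 exists B : set R, measurable B /\ A = X s @^-1` B]
      `|` [set N | P.-negligible N] >>.

Definition admissible {d} {Om : measurableType d} {R : realType}
  (P : probability Om R) (X : R -> Om -> R) (S : set R) (c : R)
  (C : R -> Om -> R) : Prop :=
  [/\ forall w s t, 0 <= s -> s <= t -> C t w <= C s w,
      forall w t, 0 <= t -> (fun u => C u w) @ t^'+ --> C t w,
      forall t, 0 <= t -> forall B : set R, measurable B ->
        nat_filtration P X t (C t @^-1` B),
      forall w t, 0 <= t -> S (C t w)
    & forall w t, 0 <= t -> C t w <= c].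

Definition XC {Om : Type} {R : realType} (X C : R -> Om -> R) (t : R) (w : Om) : R :=
  X t w - Rintegral lebesgue_measure `[0, t] (fun s => C s w).

(* ruin time tau = inf {t >= 0 : X^C_t < 0} (+oo if empty) *)
Definition ruin_time {Om : Type} {R : realType} (X C : R -> Om -> R) (w : Om)
  : \bar R :=
  ereal_inf (EFin @` [set t | 0 <= t /\ XC X C t w < 0]).

Definition Jval {d} {Om : measurableType d} {R : realType}
  (P : probability Om R) (X : R -> Om -> R) (q Lam : R) (C : R -> Om -> R)
  : \bar R :=
  (\int[P]_w
     \int[lebesgue_measure]_(s in [set s : R | (0 <= s)%R /\ (s%:E < ruin_time X C w)%E])
        ((expR (- (q * s)) * (C s w + Lam))%R)%:E)%E.

Definition Vval {d} {Om : measurableType d} {R : realType}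
  (P : probability Om R) (W : R -> Om -> R) (mu sigma q Lam : R)
  (S : set R) (x c : R) : \bar R :=
  ereal_sup [set Jval P (Xproc W x mu sigma) q Lam C
            | C in admissible P (Xproc W x mu sigma) S c].

Definition consecutive {R : realType} (S : set R) (a b : R) : Prop :=
  [/\ S a, S b, a < b & ~ (exists y, S y /\ a < y /\ y < b)].

Definition mesh {R : realType} (S : set R) : R :=
  sup [set g | exists a b, consecutive S a b /\ g = b - a].

Definition round_down {R : realType} (S : set R) (c : R) : R :=
  sup [set c' | S c' /\ c' <= c].

Definition Vn {d} {Om : measurableType d} {R : realType}
  (P : probability Om R) (W : R -> Om -> R) (mu sigma q Lam : R)
  (Sn : nat -> set R) (n : nat) (x c : R) : \bar R :=
  Vval P W mu sigma q Lam (Sn n) x (round_down (Sn n) c).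

(* Main.v *)
Require Import Defs.
From HB Require Import structures.
From mathcomp Require Import all_boot all_order all_algebra.
From mathcomp Require Import all_classical all_reals all_analysis.
From mathcomp Require Import measurable_realfun.
Import Order.TTheory GRing.Theory Num.Theory.
Import numFieldNormedType.Exports.
Local Open Scope classical_set_scope.
Local Open Scope ring_scope.
Set Implicit Arguments. Unset Strict Implicit. Unset Printing Implicit Defensive.
Section Round.
Variable R : realType.
Implicit Types (s : seq R) (y : R).

Definition gdown s y : R := \big[Num.max/0]_(z <- s | z < y) z.
Definition gup s (c y : R) : R := \big[Num.min/c]_(z <- s | y <= z) z.

Lemma gdown_cases s y : gdown s y = 0 \/ (gdown s y \in s /\ gdown s y < y).
Proof.
rewrite /gdown; elim: s => [|a s IH]; first by rewrite big_nil; left.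
rewrite big_cons; case: ifPn => ay; last first.
  by case: IH => [->|[h1 h2]]; [left|right; split => //; rewrite in_cons h1 orbT].
rewrite maxEle; case: ifPn => _.
  by case: IH => [->|[h1 h2]]; [left|right; split => //; rewrite in_cons h1 orbT].
by right; rewrite in_cons eqxx.
Qed.

Lemma gdown_ub s y z : z \in s -> z < y -> z <= gdown s y.
Proof.
rewrite /gdown; elim: s => [//|a s IH]; rewrite in_cons big_cons.
case/orP => [/eqP -> ay|zs zy]; first by rewrite ay le_max lexx.
case: ifPn => _; last exact: IH.
by rewrite le_max IH ?orbT.
Qed.

Lemma gdown_ge0 s y : 0 <= gdown s y.
Proof.
rewrite /gdown; elim: s => [|a s IH]; first by rewrite big_nil.
by rewrite big_cons; case: ifPn => _ //; rewrite le_max IH orbT.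
Qed.

Lemma gdown_le s y : 0 <= y -> gdown s y <= y.
Proof. by move=> y0; case: (gdown_cases s y) => [->|[_ /ltW]]. Qed.

Lemma gdown_lt s y : 0 < y -> gdown s y < y.
Proof. by move=> y0; case: (gdown_cases s y) => [->|[_ ]]. Qed.

Lemma gdown_mono s a b : a <= b -> gdown s a <= gdown s b.
Proof.
move=> ab; case: (gdown_cases s a) => [->|[h1 h2]]; first exact: gdown_ge0.
by apply: gdown_ub => //; exact: lt_le_trans ab.
Qed.

Lemma gup_cases s c y : gup s c y = c \/ (gup s c y \in s /\ y <= gup s c y).
Proof.
rewrite /gup; elim: s => [|a s IH]; first by rewrite big_nil; left.
rewrite big_cons; case: ifPn => ay; last first.
  by case: IH => [->|[h1 h2]]; [left|right; split => //; rewrite in_cons h1 orbT].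
rewrite minEle; case: ifPn => _; first by right; rewrite in_cons eqxx.
by case: IH => [->|[h1 h2]]; [left|right; split => //; rewrite in_cons h1 orbT].
Qed.

Lemma gup_lb s c y z : z \in s -> y <= z -> gup s c y <= z.
Proof.
rewrite /gup; elim: s => [//|a s IH]; rewrite in_cons big_cons.
case/orP => [/eqP -> ay|zs zy]; first by rewrite ay ge_min lexx.
case: ifPn => _; last exact: IH.
by rewrite ge_min IH ?orbT.
Qed.

Lemma mesh_bound s cbar y : 0 < cbar -> 0 \in s -> cbar \in s ->
  (forall z, z \in s -> 0 <= z <= cbar) -> 0 < y <= cbar ->
  y - gdown s y <= mesh [set` s].
Proof.
move=> c0 s0 sc sb /andP[y0 yc].
set a := gdown s y; set b := gup s cbar y.
have as_ : a \in s by rewrite /a; case: (gdown_cases s y) => [->|[]].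
have ay : a < y by exact: gdown_lt.
have bs : b \in s by rewrite /b; case: (gup_cases s cbar y) => [->|[]].
have yb : y <= b by rewrite /b; case: (gup_cases s cbar y) => [->|[]].
have cons : consecutive [set` s] a b.
  split => //; first exact: lt_le_trans yb.
  move=> [z [zs [az zb]]].
  have [zy|yz] := ltP z y.
    by move/(lt_le_trans az): (gdown_ub zs zy); rewrite ltxx.
  by move/(le_lt_trans (gup_lb cbar zs yz)): zb; rewrite ltxx.
apply: (@le_trans _ _ (b - a)); first by rewrite lerD2r.
apply: sup_upper_bound; last by exists a, b.
split; first by exists (b - a), a, b.
exists cbar => _ [a' [b' [[Sa' Sb' _ _] ->]]].
have /andP[a'0 _] := sb _ Sa'; have /andP[_ b'c] := sb _ Sb'.
by rewrite lerBlDr (le_trans b'c)// lerDl.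
Qed.

Lemma mesh_ge0 s cbar : 0 < cbar -> 0 \in s -> cbar \in s ->
  (forall z, z \in s -> 0 <= z <= cbar) -> 0 <= mesh [set` s].
Proof.
move=> c0 s0 sc sb.
have h : 0 < cbar <= cbar by rewrite c0 lexx.
apply: le_trans (mesh_bound c0 s0 sc sb h).
by rewrite subr_ge0 gdown_le// ltW.
Qed.

Lemma mesh_bound0 s cbar y : 0 < cbar -> 0 \in s -> cbar \in s ->
  (forall z, z \in s -> 0 <= z <= cbar) -> 0 <= y <= cbar ->
  y - gdown s y <= mesh [set` s].
Proof.
move=> c0 s0 sc sb /andP[y0 yc]; have [y0'|] := ltP 0 y.
  by apply: (mesh_bound c0 s0 sc sb); rewrite y0' yc.
rewrite le_eqVlt ltNge y0 orbF => /eqP ->.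
have -> : gdown s 0 = 0 by apply/eqP; rewrite eq_le gdown_ge0 gdown_le.
by rewrite subr0; exact: mesh_ge0 sc sb.
Qed.

End Round.
Section outer.
Context d (T : measurableType d) (R : realType) (P : probability T R).
Import HBNNSimple.

Section hk.
Variables (h : {nnsfun T >-> R}) (k : R).
Definition hk (x : T) : R := Num.max (h x - k) 0.
Lemma hk_ge0 x : 0 <= hk x.
Proof. by rewrite /hk le_max lexx orbT. Qed.
HB.instance Definition _ := isNonNegFun.Build T R hk hk_ge0.
Lemma hk_meas : measurable_fun setT hk.
Proof.
apply: (@measurable_realfun.measurable_maxr _ _ R setT (fun x => h x - k) (cst 0)) => //.
by apply: measurable_realfun.measurable_funB => //; exact: measurable_funPT.
Qed.
HB.instance Definition _ := isMeasurableFun.Build d _ T R hk hk_meas.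
Lemma hk_fin : finite_set (range hk).
Proof.
apply: (@sub_finite_set _ _ ((fun y => Num.max (y - k) 0) @` range h)).
  by move=> _ [x _ <-]; exists (h x) => //; exists x.
by apply: finite_image; exact: fimfunP.
Qed.
HB.instance Definition _ := FiniteImage.Build T R hk hk_fin.
Definition hk_nnsfun : {nnsfun T >-> R} := hk.
End hk.

Lemma outer_le (F G : T -> \bar R) (k : R) : 0 <= k ->
  (forall x, (0 <= F x)%E) -> (forall x, (0 <= G x)%E) ->
  (forall x, (F x <= G x + k%:E)%E) ->
  (\int[P]_x F x <= \int[P]_x G x + k%:E)%E.
Proof.
move=> k0 F0 G0 FG.
rewrite ge0_integralTE//; apply: ge_ereal_sup => _ [h /= hF <-].
have h1 : (sintegral P (hk_nnsfun h k) <= \int[P]_x G x)%E.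
  rewrite ge0_integralTE//; apply: ereal_sup_ubound; exists (hk_nnsfun h k) => //.
  move=> x /=; rewrite /hk; have [hk0|hk0] := leP (h x - k) 0.
    by [].
  rewrite EFinB leeBlDr//.
  exact: le_trans (hF x) (FG x).
pose kk := @cst_nnsfun _ T R (NngNum k0).
have h2 : (sintegral P h <= sintegral P (add_nnsfun (hk_nnsfun h k) kk))%E.
  apply: le_sintegral => x /=; rewrite /hk.
  by rewrite -lerBlDr le_max lexx.
apply: le_trans h2 _; rewrite sintegralD.
apply: leeD => //.
have := @sintegral_EFin_cst _ T R P setT (NngNum k0).
rewrite patch_setT /= probability_setT mule1 => <-.
by [].
Qed.
End outer.
Section ctrl.
Context d (T : measurableType d) (R : realType) (P : probability T R).
Variables (X : R -> T -> R) (s : seq R) (cbar : R).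
Hypothesis s0 : 0 \in s.
Hypothesis sb : forall z, z \in s -> 0 <= z <= cbar.

Lemma gdown_in y : gdown s y \in s.
Proof. by case: (gdown_cases s y) => [->|[]]. Qed.

Lemma gdown_meas : measurable_fun setT (gdown s).
Proof. by apply: measurable_realfun.nondecreasing_measurable => // a b; exact: gdown_mono. Qed.

Lemma adm_round c (C : R -> T -> R) :
  admissible P X `[0, cbar] c C ->
  admissible P X [set` s] (round_down [set` s] c) (fun t w => gdown s (C t w)).
Proof.
move=> [Cni Crc Cad CS Cc].
have Cb w t : 0 <= t -> 0 <= C t w <= cbar.
  by move=> t0; have := CS w t t0; rewrite /= in_itv.
split.
- by move=> w u t u0 ut; apply: gdown_mono; exact: Cni.
- move=> w t t0; apply: cvg_near_cst.
  have /andP[y0 yc] := Cb w t t0.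
  have [yp|] := ltP 0 (C t w); last first.
    move=> y0'; have Ct0 : C t w = 0 by apply/eqP; rewrite eq_le y0' y0.
    near=> u; have tu : t < u by near: u; exact: nbhs_right_gt.
    have /andP[u0 _] := Cb w u (le_trans t0 (ltW tu)).
    have : C u w <= C t w by apply: Cni => //; exact: ltW.
    rewrite Ct0 => uc; have -> : C u w = 0 by apply/eqP; rewrite eq_le uc u0.
    by [].
  have ay := gdown_lt s yp.
  have := cvgr_gt _ (Crc w t t0) _ ay.
  move=> Hnear.
  near=> u; have tu : t < u by near: u; exact: nbhs_right_gt.
  have au : gdown s (C t w) < C u w by near: u; exact: Hnear.
  apply/eqP; rewrite eq_le; apply/andP; split.
    by apply: gdown_mono; apply: Cni => //; exact: ltW.
  by apply: gdown_ub => //; exact: gdown_in.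
- move=> t t0 B mB.
  have := Cad t t0 (gdown s @^-1` B).
  apply; rewrite -[X in measurable X]setTI; exact: gdown_meas.
- by move=> w t t0; exact: gdown_in.
- move=> w t t0.
  have /andP[y0 yc] := Cb w t t0.
  apply: sup_upper_bound; last first.
    split; first exact: gdown_in.
    exact: le_trans (gdown_le s y0) (Cc w t t0).
  split.
    by exists 0; split => //; exact: le_trans y0 (Cc w t t0).
  by exists c => z [].
Unshelve. all: by end_near.
Qed.
End ctrl.
Section inner.
Context (R : realType).
Local Notation leb := (@lebesgue_measure R).

Lemma measD (tau : \bar R) : measurable [set s : R | 0 <= s /\ (s%:E < tau)%E].
Proof.
case: tau => [r| |].
- have -> : [set s : R | 0 <= s /\ (s%:E < r%:E)%E] = `[0, r[%classic.
    apply/seteqP; split => x /=; rewrite in_itv /= lte_fin.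
      by case=> -> ->.
    by case/andP => -> ->.
  exact: measurable_itv.
- have -> : [set s : R | 0 <= s /\ (s%:E < +oo)%E] = `[0, +oo[%classic.
    apply/seteqP; split => x /=; rewrite in_itv /= ?andbT.
      by case.
    by move=> ->; rewrite ltry.
  exact: measurable_itv.
- have -> : [set s : R | 0 <= s /\ (s%:E < -oo)%E] = set0.
    by apply/seteqP; split => x //= [_]; rewrite ltNge leNye.
  exact: measurable0.
Qed.

Lemma meas_ni (C : R -> R) (D : set R) : measurable D -> D `<=` [set s | 0 <= s] ->
  (forall s t, 0 <= s -> s <= t -> C t <= C s) -> measurable_fun D C.
Proof.
move=> mD D0 Cni.
have mC' : measurable_fun D (fun s => C (Num.max s 0)).
  apply: measurable_realfun.nonincreasing_measurable => // a b ab.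
  apply: Cni; first by rewrite le_max lexx orbT.
  by rewrite ge_max !le_max ab lexx !orbT.
apply: eq_measurable_fun mC' => x /[!inE] /D0 /= x0.
by rewrite max_l.
Qed.

Variables (q Lam : R).
Hypotheses (q0 : 0 < q) (L0 : 0 < Lam).

Lemma meas_f (C : R -> R) (D : set R) : measurable D -> D `<=` [set s | 0 <= s] ->
  (forall s t, 0 <= s -> s <= t -> C t <= C s) ->
  measurable_fun D (fun s : R => ((expR (- (q * s)) * (C s + Lam))%:E : \bar R)).
Proof.
move=> mD D0 Cni; apply/measurable_EFinP; apply: measurable_funM.
  apply: measurableT_comp; first exact: measurable_expR.
  apply: measurableT_comp => //; apply: measurable_funM => //.
apply: measurable_funD => //; exact: meas_ni.
Qed.

Lemma integrable_ni (C : R -> R) (cbar t : R) : 0 <= t ->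
  (forall s t, 0 <= s -> s <= t -> C t <= C s) ->
  (forall s, 0 <= s -> 0 <= C s <= cbar) ->
  leb.-integrable `[0, t] (EFin \o C).
Proof.
move=> t0 Cni Cb; apply: measurable_bounded_integrable => //.
- have := lebesgue_measure_itv `[0, t]; rewrite /= => ->.
  by case: ifP => _; rewrite ?ltry // -EFinD ltry.
- by apply: meas_ni => // x /=; rewrite in_itv /= => /andP[].
- exists cbar; split; rewrite ?num_real // => M cM y /=; rewrite in_itv /= => /andP[y0 _].
  have /andP[C0 Cc] := Cb y y0.
  by rewrite ger0_norm // (le_trans Cc) // ltW.
Qed.
End inner.
Definition Dset {T : Type} {R : realType} (X C : R -> T -> R) (w : T) : set R :=
  [set u : R | 0 <= u /\ (u%:E < ruin_time X C w)%E].

Section Jcmp.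
Context d (T : measurableType d) (R : realType) (P : probability T R).
Local Notation leb := (@lebesgue_measure R).
Variables (X : R -> T -> R) (s : seq R) (cbar q Lam : R).
Hypotheses (c0 : 0 < cbar) (s0 : 0 \in s) (sc : cbar \in s)
  (sb : forall z, z \in s -> 0 <= z <= cbar) (q0 : 0 < q) (L0 : 0 < Lam).

Lemma ruin_mono (C C' : R -> T -> R) w :
  (forall t, 0 <= t -> Rintegral leb `[0, t] (fun u => C' u w) <=
                       Rintegral leb `[0, t] (fun u => C u w)) ->
  (ruin_time X C w <= ruin_time X C' w)%E.
Proof.
move=> hR; rewrite /ruin_time; apply: ereal_inf_le_tmp => _ [t [t0 Ht] <-].
exists t => //; split => //; apply: le_lt_trans Ht.
by rewrite /XC lerD2l lerN2; exact: hR.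
Qed.

Lemma inner_le c (C : R -> T -> R) w :
  admissible P X `[0, cbar] c C ->
  (\int[leb]_(u in Dset X C w) ((expR (- (q * u)) * (C u w + Lam))%R)%:E <=
   \int[leb]_(u in Dset X (fun t w => gdown s (C t w)) w)
      ((expR (- (q * u)) * (gdown s (C u w) + Lam))%R)%:E
   + (mesh [set` s] / q)%:E)%E.
Proof.
move=> [Cni _ _ CS _].
set m := mesh [set` s].
set Cn := fun t w => gdown s (C t w).
have Cb u : 0 <= u -> 0 <= C u w <= cbar.
  by move=> u0; have := CS w u u0; rewrite /= in_itv.
have Cni' : forall u t, 0 <= u -> u <= t -> C t w <= C u w by move=> u t; exact: Cni.
have Cnni : forall u t, 0 <= u -> u <= t -> Cn t w <= Cn u w.
  by move=> u t u0 ut; apply: gdown_mono; exact: Cni.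
have Cnb u : 0 <= u -> 0 <= Cn u w <= cbar.
  move=> u0; have /andP[C0 Cc] := Cb u u0.
  by rewrite /Cn gdown_ge0 (le_trans (gdown_le s C0)).
have hR t : 0 <= t -> Rintegral leb `[0, t] (fun u => Cn u w) <=
                       Rintegral leb `[0, t] (fun u => C u w).
  move=> t0; apply: le_Rintegral => //.
  - exact: (integrable_ni t0 Cnni Cnb).
  - exact: (integrable_ni t0 Cni' Cb).
  move=> u /=; rewrite in_itv /= => /andP[u0 _].
  by have /andP[C0 _] := Cb u u0; exact: gdown_le.
have htau := ruin_mono hR.
have hD : Dset X C w `<=` Dset X Cn w.
  by move=> u [u0 ut]; split => //; exact: lt_le_trans htau.
have mD : measurable (Dset X C w) by exact: measD.
have mDn : measurable (Dset X Cn w) by exact: measD.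
have D0 : Dset X C w `<=` [set u | 0 <= u] by move=> u [].
have Dn0 : Dset X Cn w `<=` [set u | 0 <= u] by move=> u [].
have m0 : 0 <= m by exact: mesh_ge0 sc sb.
have e0 u : 0 < expR (- (q * u)) by exact: expR_gt0.
have mfC := meas_f q Lam mD D0 Cni'.
have mfCn := meas_f q Lam mDn Dn0 Cnni.
have mfCn' := meas_f q Lam mD D0 Cnni.
have mg : measurable_fun (Dset X C w)
    (fun u : R => ((expR (- (q * u)) * m)%:E : \bar R)).
  apply/measurable_EFinP; apply: measurable_funM => //.
  apply: measurableT_comp; first exact: measurable_expR.
  apply: measurableT_comp => //; exact: measurable_funM.
have fCn0 u : 0 <= u -> (0 <= ((expR (- (q * u)) * (Cn u w + Lam))%R)%:E)%E.
  move=> u0; rewrite lee_fin; apply: mulr_ge0; first exact: ltW.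
  by have /andP[C0 _] := Cnb u u0; rewrite addr_ge0 // ltW.
have g0 u : (0 <= ((expR (- (q * u)) * m)%R)%:E)%E.
  by rewrite lee_fin; apply: mulr_ge0 => //; exact: ltW.
apply: (@le_trans _ _ (\int[leb]_(u in Dset X C w)
   (((expR (- (q * u)) * (Cn u w + Lam))%R)%:E + ((expR (- (q * u)) * m)%R)%:E))%E).
  apply: ge0_le_integral => //.
  - move=> u [u0 _]; rewrite lee_fin; apply: mulr_ge0; first exact: ltW.
    by have /andP[C0 _] := Cb u u0; rewrite addr_ge0 // ltW.
  - exact: emeasurable_funD.
  - move=> u [u0 _]; rewrite -EFinD lee_fin -mulrDr; apply: ler_wpM2l; first exact: ltW.
    rewrite -addrA [Lam + m]addrC addrA lerD2r -lerBlDl.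
    exact: mesh_bound0 c0 s0 sc sb (Cb u u0).
rewrite ge0_integralD//; last by move=> u [u0 _]; exact: fCn0.
apply: leeD.
  apply: ge0_subset_integral => //.
  by move=> u [u0 _]; exact: fCn0.
apply: (@le_trans _ _ (\int[leb]_(u in Dset X C w) ((m / q)%:E * (exponential_pdf q u)%:E))%E).
  rewrite le_eqVlt; apply/orP; left; apply/eqP; apply: eq_integral => u /[!inE] [[u0 _]].
  rewrite exponential_pdfE // -EFinM; congr EFin.
  by rewrite mulNr mulrA divfK ?gt_eqF // mulrC.
rewrite ge0_integralZl_EFin //; last 3 first.
- by move=> u _; rewrite lee_fin exponential_pdf_ge0 ?ltW.
- apply/measurable_EFinP; apply: measurable_funS (measurable_exponential_pdf q) => //.
- by rewrite divr_ge0 // ltW.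
rewrite -[X in (_ <= X)%E]mule1; apply: lee_pmul => //.
- by rewrite lee_fin divr_ge0 // ltW.
- by apply: integral_ge0 => u _; rewrite lee_fin exponential_pdf_ge0 ?ltW.
rewrite -(integral_exponential_pdf q0).
apply: ge0_subset_integral => //.
- apply/measurable_EFinP; exact: measurable_exponential_pdf.
- by move=> u _; rewrite lee_fin exponential_pdf_ge0 ?ltW.
Qed.
End Jcmp.
Section Jle.
Context d (T : measurableType d) (R : realType) (P : probability T R).
Variables (X : R -> T -> R) (s : seq R) (cbar q Lam : R).
Hypotheses (c0 : 0 < cbar) (s0 : 0 \in s) (sc : cbar \in s)
  (sb : forall z, z \in s -> 0 <= z <= cbar) (q0 : 0 < q) (L0 : 0 < Lam).

Lemma J_le c (C : R -> T -> R) :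
  admissible P X `[0, cbar] c C ->
  (Jval P X q Lam C <= Jval P X q Lam (fun t w => gdown s (C t w))
     + (mesh [set` s] / q)%:E)%E.
Proof.
move=> adm; have [_ _ _ CS _] := adm.
have Cb w u : 0 <= u -> 0 <= C u w <= cbar.
  by move=> u0; have := CS w u u0; rewrite /= in_itv.
rewrite /Jval; apply: outer_le.
- by rewrite divr_ge0 // ?(mesh_ge0 c0 s0 sc sb) // ltW.
- move=> w; apply: integral_ge0 => u [u0 _]; rewrite lee_fin.
  apply: mulr_ge0; first exact: ltW (expR_gt0 _).
  by have /andP[C0 _] := Cb w u u0; rewrite addr_ge0 // ltW.
- move=> w; apply: integral_ge0 => u [u0 _]; rewrite lee_fin.
  apply: mulr_ge0; first exact: ltW (expR_gt0 _).
  by rewrite addr_ge0 ?gdown_ge0 // ltW.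
- by move=> w; exact: (inner_le c0 s0 sc sb q0 L0 w adm).
Qed.
End Jle.

Lemma adm_weaken d (T : measurableType d) (R : realType) (P : probability T R)
  (X : R -> T -> R) (S S' : set R) (c c' : R) (C : R -> T -> R) :
  S `<=` S' -> c' <= c -> admissible P X S c' C -> admissible P X S' c C.
Proof.
move=> SS' cc [h1 h2 h3 h4 h5]; split => //.
- by move=> w t t0; apply: SS'; exact: h4.
- by move=> w t t0; exact: le_trans (h5 w t t0) cc.
Qed.
Unset Implicit Arguments. Set Strict Implicit.
Theorem theorem5p2 (R : realType) (d : measure_display) (Om : measurableType d)
  (P : probability Om R) (W : R -> Om -> R) (mu sigma q Lam cbar : R)
  (Sn : nat -> set R) :
  is_std_BM P W -> 0 < sigma -> 0 < q -> 0 < Lam -> 0 < cbar ->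
  (forall n, finite_set (Sn n)) ->
  Sn 0%N = [set c | c = 0 \/ c = cbar] ->
  (forall n, Sn n `<=` Sn n.+1) ->
  (forall n, Sn n `<=` `[0, cbar]) ->
  (forall n, Sn n 0 /\ Sn n cbar) ->
  mesh (Sn n) @[n --> \oo] --> (0 : R) ->
  forall x c : R, 0 <= x -> 0 <= c <= cbar ->
    Vn P W mu sigma q Lam Sn n x c @[n --> \oo] -->
      Vval P W mu sigma q Lam `[0, cbar] x c.
Proof.
move=> _ _ q0 L0 c0 Sfin _ _ Ssub S0c meshcvg x c x0 /andP[c0' cc].
set V := Vval P W mu sigma q Lam `[0, cbar] x c.
set X := Xproc W x mu sigma.
have hn n : (Vn P W mu sigma q Lam Sn n x c <= V)%E /\
    (V <= Vn P W mu sigma q Lam Sn n x c + (mesh (Sn n) / q)%:E)%E.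
  have [sn Hs] := cid (iffLR (finite_seqP (Sn n)) (Sfin n)).
  rewrite /Vn Hs.
  have [s0 sc] := S0c n; rewrite Hs /= in s0 sc.
  have sb z : z \in sn -> 0 <= z <= cbar.
    by move=> zs; have := Ssub n z; rewrite Hs /= in_itv /=; apply.
  have rdc : round_down [set` sn] c <= c.
    apply: ge_sup; first by exists 0; split.
    by move=> z [_ ].
  split.
    apply: ereal_sup_le => _ [C hC <-]; exists C => //.
    apply: adm_weaken hC => // z /sb; rewrite /= in_itv /=.
  apply: ge_ereal_sup => _ [C hC <-].
  apply: le_trans (J_le c0 s0 sc sb q0 L0 hC) _.
  rewrite leeD2r //; apply: ereal_sup_ubound.
  by exists (fun t w => gdown sn (C t w)) => //; exact: (adm_round s0 hC).
move: (hn) => _.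
case HV : V => [v| |].
- apply: (@squeeze_cvge _ _ _ _ (fun n => (v - mesh (Sn n) / q)%:E) _ (fun n => v%:E)).
  + apply: nearW => n; have [h1 h2] := hn n; rewrite HV in h1 h2.
    by rewrite h1 andbT EFinB leeBlDr.
  + apply: cvg_EFin; first exact: nearW.
    have : (fun n => v - mesh (Sn n) / q) @ \oo --> v - 0 / q.
      by apply: cvgB; [exact: cvg_cst | exact: cvgMr_tmp meshcvg].
    by rewrite mul0r subr0.
  + exact: cvg_cst.
- have -> : (fun n => Vn P W mu sigma q Lam Sn n x c) = (fun=> +oo%E).
    apply/funext => n; have [_ h2] := hn n; rewrite HV in h2.
    by move: h2; case: (Vn _ _ _ _ _ _ _ _ _ _) => // r; rewrite leye_eq.
  by apply: cvg_near_cst; apply: nearW.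
- have -> : (fun n => Vn P W mu sigma q Lam Sn n x c) = (fun=> -oo%E).
    by apply/funext => n; have [h1 _] := hn n; rewrite HV leeNy_eq in h1; exact/eqP.
  by apply: cvg_near_cst; apply: nearW.
Qed.
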